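(* Let $\sigma\in\{+1,-1\}$, $k\ge1$, and let $a_0,a_1,\dots,a_k\in\mathbb Z^m$ be such that $a_0\notin\{0,a_1,\dots,a_k\}$ and $a_1,\dots,a_k$ are linearly independent. Suppose $n_0,n_1,\dots,n_k\in\mathbb Z$ with $n_0\ne0$ satisfy $\sum_{i=0}^kn_ia_i=0$. Then $$\sum_{i=0}^kn_i\,C(a_i,\sigma)\ne0\quad\text{in }\mathbb Z[e_1,\dots,e_m].$$ Equivalently: in a possible combinatorial graph whose vertices of a given color, other than the root $(0,+)$, span a lattice of rank $k$, either there are exactly $k$ such vertices or the graph produces an avoidable resonance.
   Context: Identify $a=\sum_ia_ie_i\in\mathbb Z^m$ with a linear form in the polynomial ring $\mathbb Z[e_1,\dots,e_m]$; $a^2$ is its square in this ring and $a^{(2)}:=\sum_ia_ie_i^2$. For $\sigma=\pm1$ set $C(a,\sigma)=\frac{\sigma}{2}(a^2+a^{(2)})$. (A vertex $(a,\sigma)$ of a graph in $\mathbb Z^m\times\{\pm\}$ has color black if $\sigma=+$, red if $\sigma=-$; a relation $\sum n_aa=0$ among vertices produces an avoidable resonance if $\sum n_aC(a,\sigma_a)\ne0$.) *)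

(* Defs.v *)
From HB Require Import structures.
From mathcomp Require Import all_boot all_order all_algebra.
Set Implicit Arguments. Unset Strict Implicit. Unset Printing Implicit Defensive.
Import Order.TTheory GRing.Theory Num.Theory.
Local Open Scope ring_scope.

(* A homogeneous quadratic polynomial in Z[e_1..e_m] (more generally Q[e])
   is represented by its coefficients: for i <= j, [p i j] is the
   coefficient of the monomial e_i * e_j (e_i^2 when i = j); entries with
   i > j are 0 by convention. *)
Definition quadpoly (m : nat) := 'I_m -> 'I_m -> rat.

(* coefficients of a^2, the square of the linear form sum_i a_i e_i *)
Definition lin_sq (m : nat) (a : 'rV[int]_m) : quadpoly m :=
  fun i j => if i == j then ((a 0 i) ^+ 2)%:~R
             else if (i < j)%N then (2 * a 0 i * a 0 j)%:~R else 0.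

Definition lin_sq2 (m : nat) (a : 'rV[int]_m) : quadpoly m :=
  fun i j => if i == j then (a 0 i)%:~R else 0.

Definition Cpoly (m : nat) (a : 'rV[int]_m) (sigma : int) : quadpoly m :=
  fun i j => (sigma%:~R / 2) * (lin_sq a i j + lin_sq2 a i j).

Definition lin_indep (m k : nat) (v : 'I_k -> 'rV[int]_m) : Prop :=
  forall c : 'I_k -> int, \sum_(i < k) c i *: v i = 0 -> forall i, c i = 0.

(* Main.v *)
Require Import Defs.
From HB Require Import structures.
From mathcomp Require Import all_boot all_order all_algebra.
Import Order.TTheory GRing.Theory Num.Theory.
Local Open Scope ring_scope.

Theorem mainTheorem9 (m k : nat) (sigma : int) (a : 'I_k.+1 -> 'rV[int]_m)
    (n : 'I_k.+1 -> int) :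
  (sigma = 1 \/ sigma = -1) ->
  (0 < k)%N ->
  a ord0 != 0 ->
  (forall i : 'I_k, a ord0 != a (lift ord0 i)) ->
  lin_indep (fun i : 'I_k => a (lift ord0 i)) ->
  n ord0 != 0 ->
  \sum_(l < k.+1) n l *: a l = 0 ->
  (fun i j => \sum_(l < k.+1) (n l)%:~R * Cpoly (a l) sigma i j)
    <> (fun _ _ => 0 : rat).
Proof.
move=> hs _ a0 hne hind n0 rel H.
have rel1 : forall j, \sum_(l < k.+1) n l * a l 0 j = 0.
  move=> j; have := congr1 (fun M : 'rV[int]_m => M 0 j) rel.
  rewrite /= summxE mxE => h; rewrite -[RHS]h; by apply: eq_bigr => l _; rewrite mxE.
have s0 : (sigma%:~R / 2 : rat) != 0.
  by case: hs => ->.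
have S : forall i j, \sum_(l < k.+1) (n l)%:~R * (lin_sq (a l) i j + lin_sq2 (a l) i j) = 0 :> rat.
  move=> i j; have := congr1 (fun f => f i j) H => /=.
  under eq_bigr => l _ do rewrite /Cpoly mulrCA.
  by rewrite -mulr_sumr => /eqP; rewrite mulf_eq0 (negbTE s0) /= => /eqP.
have key0 : forall i j : 'I_m, (i < j)%N -> \sum_(l < k.+1) n l * (a l 0 i * a l 0 j) = 0.
  move=> i j ij.
  have nij : (i == j) = false by rewrite -val_eqE /= ltn_eqF.
  have h2 : (2:rat) * (\sum_(l < k.+1) n l * (a l 0 i * a l 0 j))%:~R = 0.
    rewrite -(S i j) rmorph_sum mulr_sumr; apply: eq_bigr => l _.
    rewrite /lin_sq /lin_sq2 nij ij addr0 !rmorphM /=.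
    by rewrite mulrCA !mulrA.
  by move/eqP: h2; rewrite mulf_eq0 intr_eq0 => /orP[//|/eqP].
have key : forall i j, \sum_(l < k.+1) n l * (a l 0 i * a l 0 j) = 0.
  move=> i j; case: (ltngtP i j) => ij.
  - exact: key0.
  - rewrite -[RHS](key0 _ _ ij); apply: eq_bigr => l _; by rewrite (mulrC (a l 0 i)).
  - have eij : i = j by apply: val_inj.
    subst j; apply/eqP; rewrite -(intr_eq0 rat); apply/eqP.
    have := S i i; rewrite /lin_sq /lin_sq2 eqxx.
    under eq_bigr => l _ do rewrite mulrDr.
    rewrite big_split /=.
    have -> : \sum_(l < k.+1) (n l)%:~R * (a l 0 i)%:~R = 0 :> rat.
      transitivity ((\sum_(l < k.+1) n l * a l 0 i)%:~R : rat); last by rewrite rel1.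
      by rewrite rmorph_sum; apply: eq_bigr => l _; rewrite rmorphM.
    rewrite addr0 => <-; rewrite rmorph_sum; apply: eq_bigr => l _.
    by rewrite rmorphM /= expr2.
have vec : forall i, \sum_(l < k.+1) (n l * (a l 0 i - a ord0 0 i)) *: a l = 0.
  move=> i; apply/rowP => j; rewrite summxE mxE.
  transitivity (\sum_(l < k.+1) n l * (a l 0 i * a l 0 j)
       - a ord0 0 i * \sum_(l < k.+1) n l * a l 0 j).
    rewrite mulr_sumr -sumrB; apply: eq_bigr => l _.
    by rewrite mxE mulrBr mulrBl !mulrA (mulrC (a ord0 0 i)).
  by rewrite key rel1 mulr0 subr0.
have cz : forall i (j : 'I_k), n (lift ord0 j) * (a (lift ord0 j) 0 i - a ord0 0 i) = 0.
  move=> i; apply: hind; have := vec i.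
  by rewrite big_ord_recl subrr mulr0 scale0r add0r.
have nz : forall j : 'I_k, n (lift ord0 j) = 0.
  move=> j; case: (boolP [exists i, a (lift ord0 j) 0 i != a ord0 0 i]).
    case/existsP=> i hi; have := cz i j => /eqP; rewrite mulf_eq0 subr_eq0 (negbTE hi) orbF.
    by move/eqP.
  rewrite negb_exists => /forallP hall; case/negP: (hne j); apply/eqP/rowP => i.
  by have := hall i; rewrite negbK => /eqP ->.
move: rel; rewrite big_ord_recl big1 ?addr0; last by move=> j _; rewrite nz scale0r.
by move/eqP; rewrite scalemx_eq0 (negbTE n0) (negbTE a0).
Qed.
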